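(* Let $g:[a,b]\to\mathbb R$ be left-continuous and increasing, with $g^C$ being $p$-$H$-Hölder on $[a,b]$ (i.e. $|g^C(x)-g^C(y)|\le H|x-y|^p$ for all $x,y$, with $H>0$, $p\in(0,1]$). Let $f:[a,b]\to\mathbb R$ be $g$-Lipschitz continuous with Lipschitz constant $H$. Then $$\Big|f(a)(g^C(b)-g^C(a))-\int_a^b f(s)\,\mathrm dg^C(s)\Big|\le H^2(b-a)^p(g(b)-g(a)),$$ $$\Big|\tfrac{f(a)+f(b)}{2}(g^C(b)-g^C(a))-\int_a^b f(s)\,\mathrm dg^C(s)\Big|\le H^2\Big(\tfrac{b-a}{2}\Big)^p(g(b)-g(a)),$$ where the integrals are Kurzweil–Stieltjes integrals.
   Context: $\Delta^+g(t)=g(t^+)-g(t)$; the jump part of $g$ is $g^B(t)=\sum_{s\in[a,t)}\Delta^+g(s)$ and its continuous part is $g^C=g-g^B$. $f$ is $g$-Lipschitz continuous with constant $H$ if $|f(t)-f(s)|\le H|g(t)-g(s)|$ for all $t,s\in[a,b]$. *)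

(* Defs.v *)
From Stdlib Require Import Reals Lra List ClassicalEpsilon.
Open Scope R_scope.

(* Real power x^p for x >= 0, with the convention 0^p = 0 (p > 0). *)
Definition rpow (x p : R) : R := if Rle_dec x 0 then 0 else Rpower x p.

Definition is_right_lim (g : R -> R) (t l : R) : Prop :=
  forall eps, 0 < eps -> exists d, 0 < d /\
    forall s, t < s < t + d -> Rabs (g s - l) < eps.

(* g(t^+) (chosen classically; meaningful when the right limit exists). *)
Definition right_lim (g : R -> R) (t : R) : R :=
  epsilon (inhabits 0) (fun l => is_right_lim g t l).

Definition jump_plus (g : R -> R) (t : R) : R := right_lim g t - g t.

Definition jump_partial_sums (g : R -> R) (a t : R) (x : R) : Prop :=
  exists l : list R, NoDup l /\ Forall (fun s => a <= s < t) l /\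
    x = fold_right Rplus 0 (map (jump_plus g) l).

(* Jump part g^B(t) = sum_{s in [a,t)} Delta^+ g(s), defined as the supremum
   of the finite partial sums (the sum of a family of nonnegative terms). *)
Definition jump_part (g : R -> R) (a t : R) : R :=
  epsilon (inhabits 0) (fun S => is_lub (jump_partial_sums g a t) S).

Definition cont_part (g : R -> R) (a : R) (t : R) : R := g t - jump_part g a t.

(* Tagged divisions of [a,b] as lists of (left end, tag, right end),
   fine with respect to the gauge delta. *)
Fixpoint fine_tagged_division (delta : R -> R) (a b : R)
    (P : list (R * R * R)) : Prop :=
  match P with
  | nil => a = b
  | (u, tau, v) :: P' =>
      u = a /\ u < v /\ u <= tau <= v /\
      tau - delta tau < u /\ v < tau + delta tau /\
      fine_tagged_division delta v b P'
  end.

Definition RS_sum (f g : R -> R) (P : list (R * R * R)) : R :=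
  fold_right Rplus 0
    (map (fun x => match x with (u, tau, v) => f tau * (g v - g u) end) P).

Definition KS_integral (f g : R -> R) (a b I : R) : Prop :=
  forall eps, 0 < eps -> exists delta : R -> R,
    (forall t, a <= t <= b -> 0 < delta t) /\
    forall P, fine_tagged_division delta a b P ->
      Rabs (RS_sum f g P - I) < eps.

Definition nondecreasing_on (g : R -> R) (a b : R) : Prop :=
  forall x y, a <= x -> x <= y -> y <= b -> g x <= g y.

Definition left_continuous_on (g : R -> R) (a b : R) : Prop :=
  forall t, a < t <= b -> forall eps, 0 < eps -> exists d, 0 < d /\
    forall s, a <= s -> t - d < s <= t -> Rabs (g s - g t) < eps.

Definition holder_on (h : R -> R) (a b H p : R) : Prop :=
  forall x y, a <= x <= b -> a <= y <= b ->
    Rabs (h x - h y) <= H * rpow (Rabs (x - y)) p.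

Definition g_lipschitz_on (f g : R -> R) (a b H : R) : Prop :=
  forall t s, a <= t <= b -> a <= s <= b ->
    Rabs (f t - f s) <= H * Rabs (g t - g s).

(* Main.v *)
Require Import Defs.
From Stdlib Require Import Reals Lra Lia ZArith List ClassicalEpsilon Classical.
Open Scope R_scope.

Definition sumj (g : R -> R) (l : list R) := fold_right Rplus 0 (map (jump_plus g) l).

Lemma right_lim_le (g : R -> R) (a b s t : R) :
  nondecreasing_on g a b -> a <= s -> s < t -> t <= b -> right_lim g s <= g t.
Proof.
  intros Hm Has Hst Htb.
  assert (Hex : exists l, is_right_lim g s l).
  { set (E := fun r => exists u, s < u <= b /\ r = - g u).
    assert (HB : bound E).
    { exists (- g s). intros r [u [Hu ->]]. apply Ropp_le_contravar. apply Hm; lra. }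
    assert (HE : exists x, E x). { exists (- g b). exists b. split; [lra|auto]. }
    destruct (completeness E HB HE) as [m [Hub Hlub]].
    exists (- m). intros eps He.
    assert (~ is_upper_bound E (m - eps)).
    { intro Hc. specialize (Hlub _ Hc). lra. }
    apply not_all_ex_not in H. destruct H as [r Hr].
    apply imply_to_and in Hr. destruct Hr as [[u0 [Hu0 ->]] Hr].
    exists (u0 - s). split; [lra|]. intros u Hu.
    assert (g u <= g u0) by (apply Hm; lra).
    assert (- g u <= m) by (apply Hub; exists u; split; [lra|auto]).
    apply Rabs_def1; lra. }
  unfold right_lim. pose proof (epsilon_spec (inhabits 0) _ Hex) as Hs.
  set (l := epsilon (inhabits 0) (fun l => is_right_lim g s l)) in *.
  apply Rnot_lt_le. intro Hlt.
  destruct (Hs (l - g t)) as [d [Hd Hd2]]; [lra|].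
  set (u := s + Rmin d (t - s) / 2).
  assert (Rmin d (t - s) > 0) by (apply Rmin_glb_lt; lra).
  assert (Rmin d (t-s) <= d) by apply Rmin_l.
  assert (Rmin d (t-s) <= t - s) by apply Rmin_r.
  specialize (Hd2 u). assert (s < u < s + d) by (unfold u; lra).
  apply Hd2 in H2. apply Rabs_def2 in H2.
  assert (g u <= g t) by (apply Hm; unfold u; lra). lra.
Qed.

Lemma NoDup_remove' (l : list R) (x : R) : NoDup l -> NoDup (remove Req_dec_T x l).
Proof.
  induction l as [|s l IH]; simpl; intros Hn; auto.
  inversion Hn; subst. destruct (Req_dec_T x s).
  - auto.
  - constructor; auto. intro Hi. apply in_remove in Hi. tauto.
Qed.

Lemma sumj_remove g l m : NoDup l -> In m l -> sumj g l = jump_plus g m + sumj g (remove Req_dec_T m l).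
Proof.
  induction l as [|s l IH]; simpl; intros Hn Hi; [contradiction|].
  inversion Hn; subst. destruct (Req_dec_T m s) as [e|e].
  - subst. rewrite notin_remove; auto.
  - destruct Hi as [Hi|Hi]; [congruence|]. simpl. unfold sumj in *. simpl. rewrite IH; auto. ring.
Qed.

Lemma list_max (l : list R) : l <> nil -> exists m, In m l /\ forall s, In s l -> s <= m.
Proof.
  induction l as [|s l IH]; intros Hne; [congruence|].
  destruct l as [|s' l'].
  - exists s. split; [left; auto|]. intros x [->|[]]; lra.
  - destruct IH as [m [Hm1 Hm2]]; [discriminate|].
    exists (Rmax s m). split.
    + unfold Rmax. destruct (Rle_dec s m); [right; auto|left; auto].
    + intros x [<-|Hx]. apply Rmax_l. eapply Rle_trans; [apply Hm2; auto|apply Rmax_r].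
Qed.

Lemma sum_jumps_le (g : R -> R) (a b : R) : nondecreasing_on g a b ->
  forall n l x y, (length l <= n)%nat -> NoDup l -> Forall (fun s => x <= s < y) l ->
  a <= x -> x <= y -> y <= b -> sumj g l <= g y - g x.
Proof.
  intros Hm. induction n as [|n IH]; intros l x y Hl Hn Hf Hax Hxy Hyb.
  - destruct l; [|simpl in Hl; lia]. unfold sumj; simpl.
    assert (g x <= g y) by (apply Hm; lra). lra.
  - destruct l as [|s0 l0] eqn:El.
    + unfold sumj; simpl. assert (g x <= g y) by (apply Hm; lra). lra.
    + rewrite <- El in *. destruct (list_max l) as [m [Hm1 Hm2]]; [rewrite El; discriminate|].
      rewrite Forall_forall in Hf.
      pose proof (Hf m Hm1) as Hmr.
      rewrite (sumj_remove g l m Hn Hm1).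
      assert (Hr : sumj g (remove Req_dec_T m l) <= g m - g x).
      { apply IH; try lra.
        - pose proof (remove_length_lt Req_dec_T l m Hm1). lia.
        - apply NoDup_remove'; auto.
        - rewrite Forall_forall. intros z Hz. apply in_remove in Hz. destruct Hz as [Hz1 Hz2].
          pose proof (Hf z Hz1). pose proof (Hm2 z Hz1). split; [lra|].
          destruct (Rle_lt_or_eq_dec z m); auto; congruence. }
      unfold jump_plus. pose proof (right_lim_le g a b m y Hm ltac:(lra) ltac:(lra) Hyb). lra.
Qed.

Lemma jump_part_lub g a b t : nondecreasing_on g a b -> a <= t <= b ->
  is_lub (jump_partial_sums g a t) (jump_part g a t).
Proof.
  intros Hm Ht. unfold jump_part. apply epsilon_spec.
  assert (HB : bound (jump_partial_sums g a t)).
  { exists (g t - g a). intros z [l [Hn [Hf ->]]].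
    apply (sum_jumps_le g a b Hm (length l)); auto; lra. }
  assert (HE : exists x, jump_partial_sums g a t x).
  { exists 0. exists nil. split; [constructor|split; [constructor|reflexivity]]. }
  destruct (completeness _ HB HE) as [m Hm']. exists m; auto.
Qed.

Definition ltb (x s : R) : bool := if Rlt_dec s x then true else false.

Lemma sumj_split g x l : sumj g l = sumj g (filter (ltb x) l) + sumj g (filter (fun s => negb (ltb x s)) l).
Proof.
  induction l as [|s l IH]; unfold sumj in *; simpl; [ring|].
  destruct (ltb x s); simpl; rewrite IH; ring.
Qed.

Lemma jump_part_incr g a b x y : nondecreasing_on g a b -> a <= x -> x <= y -> y <= b ->
  jump_part g a y <= jump_part g a x + (g y - g x).
Proof.
  intros Hm Hax Hxy Hyb.
  destruct (jump_part_lub g a b x Hm ltac:(lra)) as [Hux _].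
  destruct (jump_part_lub g a b y Hm ltac:(lra)) as [_ Hly].
  apply Hly. intros z [l [Hn [Hf ->]]].
  fold (sumj g l). rewrite (sumj_split g x l).
  rewrite Forall_forall in Hf.
  apply Rplus_le_compat.
  - apply Hux. exists (filter (ltb x) l). split; [apply NoDup_filter; auto|split; [|reflexivity]].
    rewrite Forall_forall. intros s Hs. apply filter_In in Hs. destruct Hs as [Hs1 Hs2].
    unfold ltb in Hs2. destruct (Rlt_dec s x); [|discriminate]. pose proof (Hf s Hs1). lra.
  - apply (sum_jumps_le g a b Hm (length (filter (fun s => negb (ltb x s)) l))); auto; try lra.
    + apply NoDup_filter; auto.
    + rewrite Forall_forall. intros s Hs. apply filter_In in Hs. destruct Hs as [Hs1 Hs2].
      unfold ltb in Hs2. destruct (Rlt_dec s x); [discriminate|]. pose proof (Hf s Hs1). lra.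
Qed.

Lemma cont_part_mono g a b x y : nondecreasing_on g a b -> a <= x -> x <= y -> y <= b ->
  cont_part g a x <= cont_part g a y.
Proof.
  intros. unfold cont_part. pose proof (jump_part_incr g a b x y H H0 H1 H2). lra.
Qed.
Fixpoint tchain (c b : R) (P : list (R*R*R)) : Prop :=
  match P with
  | nil => c = b
  | (u, t, v) :: P' => u = c /\ u < v /\ u <= t <= v /\ tchain v b P'
  end.

Lemma tchain_le c b P : tchain c b P -> c <= b.
Proof.
  revert c; induction P as [|[[u t] v] P IH]; simpl; intros c H; [lra|].
  destruct H as [-> [H1 [H2 H3]]]. apply IH in H3. lra.
Qed.

Lemma fine_tchain d c b P : fine_tagged_division d c b P -> tchain c b P.
Proof.
  revert c; induction P as [|[[u t] v] P IH]; simpl; intros c H; [lra|].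
  destruct H as [-> [H1 [H2 [H3 [H4 H5]]]]]. repeat split; auto; lra.
Qed.

Definition Wsum (g h : R -> R) (P : list (R*R*R)) : R :=
  fold_right Rplus 0 (map (fun x => match x with (u, t, v) => (g v - g u) * (h v - h u) end) P).

Lemma RS_cons f h u t v P : RS_sum f h ((u,t,v)::P) = f t * (h v - h u) + RS_sum f h P.
Proof. reflexivity. Qed.
Lemma W_cons g h u t v P : Wsum g h ((u,t,v)::P) = (g v - g u) * (h v - h u) + Wsum g h P.
Proof. reflexivity. Qed.

Section Merge.
Variables (f g h : R -> R) (a b H : R).
Hypothesis Hg : nondecreasing_on g a b.
Hypothesis Hh : nondecreasing_on h a b.
Hypothesis Hf : g_lipschitz_on f g a b H.
Hypothesis HH : 0 <= H.

Lemma cell_bound c c0 c0' t v s w :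
  a <= c0 <= c -> a <= c0' <= c -> c <= v <= b -> c <= w <= b -> c0 <= t <= v -> c0' <= s <= w ->
  Rabs (f t - f s) <= H * ((g v - g c0) + (g w - g c0')).
Proof.
  intros. eapply Rle_trans; [apply Hf; lra|].
  apply Rmult_le_compat_l; auto.
  assert (g c0 <= g t) by (apply Hg; lra). assert (g t <= g v) by (apply Hg; lra).
  assert (g c0 <= g c) by (apply Hg; lra). assert (g c <= g v) by (apply Hg; lra).
  assert (g c0' <= g s) by (apply Hg; lra). assert (g s <= g w) by (apply Hg; lra).
  assert (g c0' <= g c) by (apply Hg; lra). assert (g c <= g w) by (apply Hg; lra).
  unfold Rabs; destruct (Rcase_abs _); lra.
Qed.

Lemma cell_bound2 c c0 c0' t v s w x :
  a <= c0 <= c -> a <= c0' <= c -> c <= v <= b -> c <= w <= b -> c0 <= t <= v -> c0' <= s <= w ->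
  c <= x -> x <= v -> x <= w ->
  Rabs ((f t - f s) * (h x - h c)) <= H * ((g v - g c0) + (g w - g c0')) * (h x - h c).
Proof.
  intros. rewrite Rabs_mult. assert (h c <= h x) by (apply Hh; lra).
  rewrite (Rabs_pos_eq (h x - h c)) by lra.
  apply Rmult_le_compat_r; [lra|]. eapply cell_bound; eauto.
Qed.

Definition merge_stmt (n : nat) := forall c c0 c0' t v P s w Q,
  (length P + length Q <= n)%nat ->
  a <= c0 <= c -> a <= c0' <= c -> c < v -> c < w -> c0 <= t <= v -> c0' <= s <= w ->
  tchain v b P -> tchain w b Q ->
  Rabs (RS_sum f h ((c,t,v)::P) - RS_sum f h ((c,s,w)::Q)) <=
  H * ((g v - g c0) * (h v - h c) + Wsum g h P + ((g w - g c0') * (h w - h c) + Wsum g h Q)).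

Lemma merge n : merge_stmt n.
Proof.
  induction n as [n IH] using (well_founded_induction Wf_nat.lt_wf).
  intros c c0 c0' t v P s w Q Hlen Hc0 Hc0' Hcv Hcw Ht Hs HP HQ.
  pose proof (tchain_le _ _ _ HP) as Hvb. pose proof (tchain_le _ _ _ HQ) as Hwb.
  rewrite !RS_cons.
  destruct (Rtotal_order v w) as [Hvw|[Hvw|Hvw]].
  - destruct P as [|[[u1 t1] v1] P1]; [simpl in HP; lra|].
    destruct HP as [-> [Hv1 [Ht1 HP1]]].
    pose proof (cell_bound2 c c0 c0' t v s w v Hc0 Hc0' ltac:(lra) ltac:(lra) Ht Hs ltac:(lra) ltac:(lra) ltac:(lra)).
    assert (IH' := IH (length P1 + length Q)%nat ltac:(simpl in Hlen; lia) v v c0' t1 v1 P1 s w Q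
      ltac:(lia) ltac:(lra) ltac:(lra) Hv1 Hvw Ht1 ltac:(lra) HP1 HQ).
    rewrite !RS_cons in IH'. rewrite !RS_cons.
    replace (f t * (h v - h c) + (f t1 * (h v1 - h v) + RS_sum f h P1) - (f s * (h w - h c) + RS_sum f h Q))
      with ((f t - f s) * (h v - h c) + (f t1 * (h v1 - h v) + RS_sum f h P1 - (f s * (h w - h v) + RS_sum f h Q))) by ring.
    eapply Rle_trans; [apply Rabs_triang|].
    rewrite W_cons.
    replace (H * ((g v - g c0) * (h v - h c) + ((g v1 - g v) * (h v1 - h v) + Wsum g h P1) + ((g w - g c0') * (h w - h c) + Wsum g h Q)))
      with (H * ((g v - g c0) + (g w - g c0')) * (h v - h c) +
            H * ((g v1 - g v) * (h v1 - h v) + Wsum g h P1 + ((g w - g c0') * (h w - h v) + Wsum g h Q))) by ring.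
    apply Rplus_le_compat; auto.
  - subst w.
    destruct P as [|[[u1 t1] v1] P1]; destruct Q as [|[[u2 t2] v2] Q1].
    + simpl in *. unfold RS_sum, Wsum; simpl.
      pose proof (cell_bound2 c c0 c0' t v s v v Hc0 Hc0' ltac:(lra) ltac:(lra) Ht Hs ltac:(lra) ltac:(lra) ltac:(lra)).
      replace (f t * (h v - h c) + 0 - (f s * (h v - h c) + 0)) with ((f t - f s) * (h v - h c)) by ring.
      eapply Rle_trans; [apply H0|]. right; ring.
    + simpl in HP. destruct HQ as [-> [Hv2 [_ HQ1]]]. pose proof (tchain_le _ _ _ HQ1). lra.
    + simpl in HQ. destruct HP as [-> [Hv1 [_ HP1]]]. pose proof (tchain_le _ _ _ HP1). lra.
    + destruct HP as [-> [Hv1 [Ht1 HP1]]]. destruct HQ as [-> [Hv2 [Ht2 HQ1]]].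
      pose proof (cell_bound2 c c0 c0' t v s v v Hc0 Hc0' ltac:(lra) ltac:(lra) Ht Hs ltac:(lra) ltac:(lra) ltac:(lra)).
      assert (IH' := IH (length P1 + length Q1)%nat ltac:(simpl in Hlen; lia) v v v t1 v1 P1 t2 v2 Q1
        ltac:(lia) ltac:(lra) ltac:(lra) Hv1 Hv2 Ht1 Ht2 HP1 HQ1).
      rewrite !RS_cons in IH'. rewrite !RS_cons, !W_cons.
      replace (f t * (h v - h c) + (f t1 * (h v1 - h v) + RS_sum f h P1) - (f s * (h v - h c) + (f t2 * (h v2 - h v) + RS_sum f h Q1)))
        with ((f t - f s) * (h v - h c) + (f t1 * (h v1 - h v) + RS_sum f h P1 - (f t2 * (h v2 - h v) + RS_sum f h Q1))) by ring.
      eapply Rle_trans; [apply Rabs_triang|].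
      replace (H * ((g v - g c0) * (h v - h c) + ((g v1 - g v) * (h v1 - h v) + Wsum g h P1) + ((g v - g c0') * (h v - h c) + ((g v2 - g v) * (h v2 - h v) + Wsum g h Q1))))
        with (H * ((g v - g c0) + (g v - g c0')) * (h v - h c) +
              H * ((g v1 - g v) * (h v1 - h v) + Wsum g h P1 + ((g v2 - g v) * (h v2 - h v) + Wsum g h Q1))) by ring.
      apply Rplus_le_compat; auto.
  - destruct Q as [|[[u2 t2] v2] Q1]; [simpl in HQ; lra|].
    destruct HQ as [-> [Hv2 [Ht2 HQ1]]].
    pose proof (cell_bound2 c c0 c0' t v s w w Hc0 Hc0' ltac:(lra) ltac:(lra) Ht Hs ltac:(lra) ltac:(lra) ltac:(lra)).
    assert (IH' := IH (length P + length Q1)%nat ltac:(simpl in Hlen; lia) w c0 w t v P t2 v2 Q1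
      ltac:(lia) ltac:(lra) ltac:(lra) Hvw Hv2 ltac:(lra) Ht2 HP HQ1).
    rewrite !RS_cons in IH'. rewrite !RS_cons.
    replace (f t * (h v - h c) + RS_sum f h P - (f s * (h w - h c) + (f t2 * (h v2 - h w) + RS_sum f h Q1)))
      with ((f t - f s) * (h w - h c) + (f t * (h v - h w) + RS_sum f h P - (f t2 * (h v2 - h w) + RS_sum f h Q1))) by ring.
    eapply Rle_trans; [apply Rabs_triang|].
    rewrite W_cons.
    replace (H * ((g v - g c0) * (h v - h c) + Wsum g h P + ((g w - g c0') * (h w - h c) + ((g v2 - g w) * (h v2 - h w) + Wsum g h Q1))))
      with (H * ((g v - g c0) + (g w - g c0')) * (h w - h c) +
            H * ((g v - g c0) * (h v - h w) + Wsum g h P + ((g v2 - g w) * (h v2 - h w) + Wsum g h Q1))) by ring.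
    apply Rplus_le_compat; auto.
Qed.

Lemma Wsum_le d eps c P : 0 < d ->
  (forall u v, a <= u -> u <= v -> v <= b -> v - u < 2 * d -> h v - h u <= eps) ->
  a <= c -> fine_tagged_division (fun _ => d) c b P -> Wsum g h P <= eps * (g b - g c).
Proof.
  intros Hd Hos. revert c; induction P as [|[[u t] v] P IH]; intros c Hac HP.
  - simpl in HP. subst. unfold Wsum; simpl. lra.
  - destruct HP as [<- [H1 [H2 [H3 [H4 H5]]]]].
    pose proof (fine_tchain _ _ _ _ H5) as Hc. apply tchain_le in Hc.
    rewrite W_cons. specialize (IH v ltac:(lra) H5).
    assert (h v - h u <= eps) by (apply Hos; lra).
    assert (h u <= h v) by (apply Hh; lra). assert (g u <= g v) by (apply Hg; lra).
    assert ((g v - g u) * (h v - h u) <= (g v - g u) * eps) by (apply Rmult_le_compat_l; lra).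
    lra.
Qed.

Lemma cauchy_fine d eps P Q : 0 < d -> a < b ->
  (forall u v, a <= u -> u <= v -> v <= b -> v - u < 2 * d -> h v - h u <= eps) ->
  fine_tagged_division (fun _ => d) a b P -> fine_tagged_division (fun _ => d) a b Q ->
  Rabs (RS_sum f h P - RS_sum f h Q) <= 2 * H * eps * (g b - g a).
Proof.
  intros Hd Hab Hos HP HQ.
  pose proof (Wsum_le d eps a P Hd Hos ltac:(lra) HP) as W1.
  pose proof (Wsum_le d eps a Q Hd Hos ltac:(lra) HQ) as W2.
  destruct P as [|[[u1 t1] v1] P1]; [simpl in HP; lra|].
  destruct Q as [|[[u2 t2] v2] Q1]; [simpl in HQ; lra|].
  pose proof (fine_tchain _ _ _ _ HP) as TP. pose proof (fine_tchain _ _ _ _ HQ) as TQ.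
  destruct TP as [-> [Hv1 [Ht1 TP1]]]. destruct TQ as [-> [Hv2 [Ht2 TQ1]]].
  eapply Rle_trans.
  - apply (merge _ a a a t1 v1 P1 t2 v2 Q1 (le_n _)); auto; lra.
  - rewrite !W_cons in *. nra.
Qed.

Lemma bound_sum K C c P : a <= c -> tchain c b P ->
  (forall t, a <= t <= b -> Rabs (C - f t) <= K) ->
  Rabs (C * (h b - h c) - RS_sum f h P) <= K * (h b - h c).
Proof.
  intros Hac HP HK. revert c Hac HP; induction P as [|[[u t] v] P IH]; intros c Hac HP.
  - simpl in HP. subst. unfold RS_sum; simpl. rewrite Rminus_diag, Rmult_0_r, Rminus_0_r, Rabs_R0; lra.
  - destruct HP as [<- [H1 [H2 H3]]]. pose proof (tchain_le _ _ _ H3).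
    specialize (IH v ltac:(lra) H3). rewrite RS_cons.
    replace (C * (h b - h u) - (f t * (h v - h u) + RS_sum f h P)) with
      ((C - f t) * (h v - h u) + (C * (h b - h v) - RS_sum f h P)) by ring.
    eapply Rle_trans; [apply Rabs_triang|]. rewrite Rabs_mult.
    assert (h u <= h v) by (apply Hh; lra).
    rewrite (Rabs_pos_eq (h v - h u)) by lra.
    assert (Rabs (C - f t) * (h v - h u) <= K * (h v - h u)) by (apply Rmult_le_compat_r; [lra| apply HK; lra]).
    lra.
Qed.

End Merge.
Lemma holder_osc h a b H p : 0 < H -> 0 < p -> holder_on h a b H p ->
  forall eps, 0 < eps -> exists d, 0 < d /\
   forall u v, a <= u -> u <= v -> v <= b -> v - u < 2 * d -> h v - h u <= eps.
Proof.
  intros HH Hp Hh eps He.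
  set (r := Rpower (eps / H) (/ p)).
  assert (Hr : 0 < r) by (unfold r, Rpower; apply exp_pos).
  exists (r / 2). split; [lra|]. intros u v Hu Huv Hv Hd.
  assert (Habs := Hh v u ltac:(lra) ltac:(lra)).
  eapply Rle_trans; [apply Rle_abs|]. eapply Rle_trans; [apply Habs|].
  rewrite Rabs_pos_eq by lra. unfold rpow. destruct (Rle_dec (v - u) 0).
  - lra.
  - assert (Rpower (v - u) p < Rpower r p) by (apply Rlt_Rpower_l; lra).
    unfold r in H0. rewrite Rpower_mult in H0. rewrite Rinv_l in H0 by lra.
    rewrite Rpower_1 in H0 by (apply Rdiv_lt_0_compat; lra).
    apply Rmult_lt_compat_l with (r := H) in H0; auto.
    replace (H * (eps / H)) with eps in H0 by (field; lra). lra.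
Qed.

Lemma fine_app d a x y P Q : fine_tagged_division d a x P -> fine_tagged_division d x y Q ->
  fine_tagged_division d a y (P ++ Q).
Proof.
  revert a; induction P as [|[[u t] v] P IH]; simpl; intros a HP HQ.
  - subst; auto.
  - destruct HP as [H1 [H2 [H3 [H4 [H5 H6]]]]]. repeat split; auto; try lra; eapply IH; eauto.
Qed.

Lemma cousin d a b : a < b -> (forall t, a <= t <= b -> 0 < d t) ->
  exists P, fine_tagged_division d a b P.
Proof.
  intros Hab Hd.
  set (E := fun x => a <= x <= b /\ exists P, fine_tagged_division d a x P).
  assert (HB : bound E) by (exists b; intros x [Hx _]; lra).
  assert (HE : exists x, E x) by (exists a; split; [lra| exists nil; simpl; auto]).
  destruct (completeness E HB HE) as [s [Hub Hlub]].
  assert (Has : a <= s) by (apply Hub; split; [lra| exists nil; simpl; auto]).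
  assert (Hsb : s <= b) by (apply Hlub; intros x [Hx _]; lra).
  assert (Hds : 0 < d s) by (apply Hd; lra).
  assert (HsE : E s).
  { assert (~ is_upper_bound E (s - d s)) by (intro Hc; specialize (Hlub _ Hc); lra).
    apply not_all_ex_not in H. destruct H as [x Hx]. apply imply_to_and in Hx.
    destruct Hx as [[Hx1 [P HP]] Hx2]. assert (x <= s) by (apply Hub; split; auto; exists P; auto).
    destruct (Rle_lt_or_eq_dec x s H) as [Hlt|Heq].
    - split; [lra|]. exists (P ++ (x, s, s) :: nil). eapply fine_app; eauto. simpl. repeat split; lra.
    - subst; split; auto; exists P; auto. }
  destruct (Rle_lt_or_eq_dec s b Hsb) as [Hlt|Heq].
  - exfalso. destruct HsE as [_ [P HP]].
    set (y := Rmin b (s + d s / 2)).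
    assert (y <= b) by apply Rmin_l. assert (y <= s + d s / 2) by apply Rmin_r.
    assert (s < y) by (apply Rmin_glb_lt; lra).
    assert (E y). { split; [lra|]. exists (P ++ (s, s, y) :: nil). eapply fine_app; eauto. simpl. repeat split; lra. }
    specialize (Hub _ H2). lra.
  - subst. destruct HsE as [_ HP]. auto.
Qed.

Fixpoint unif (c st : R) (k : nat) : list (R*R*R) :=
  match k with O => nil | S k' => (c, c, c + st) :: unif (c + st) st k' end.

Lemma unif_fine d st k : 0 < st < d -> forall c, fine_tagged_division (fun _ => d) c (c + INR k * st) (unif c st k).
Proof.
  intros Hst. induction k as [|k IH]; intros c.
  - simpl; ring.
  - cbn [unif fine_tagged_division]. repeat split; try lra. replace (c + INR (S k) * st) with (c + st + INR k * st) by (rewrite S_INR; ring). apply IH.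
Qed.

Lemma arch x : exists n : nat, x < INR n.
Proof.
  destruct (archimed x) as [H1 _]. destruct (ZArith_dec.Z_lt_le_dec 0 (up x)) as [Hz|Hz].
  - exists (Z.to_nat (up x)). rewrite INR_IZR_INZ, Z2Nat.id by lia. lra.
  - exists 0%nat. apply IZR_le in Hz. simpl. lra.
Qed.

Lemma rpow_half x p : 0 < x -> 0 < p <= 1 -> rpow x p / 2 <= rpow (x / 2) p.
Proof.
  intros Hx Hp. unfold rpow. destruct (Rle_dec x 0); [lra|]. destruct (Rle_dec (x/2) 0); [lra|].
  unfold Rdiv. rewrite <- Rpower_mult_distr by lra.
  apply Rmult_le_compat_l; [unfold Rpower; left; apply exp_pos|].
  unfold Rpower. assert (ln (/2) < 0) by (rewrite <- ln_1; apply ln_increasing; lra).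
  rewrite <- (exp_ln (/2)) at 1 by lra.
  destruct (Req_dec p 1); [subst; rewrite Rmult_1_l; lra|].
  left; apply exp_increasing. nra.
Qed.

Lemma KS_bound f h a b I K C : a < b -> nondecreasing_on h a b ->
  KS_integral f h a b I -> (forall t, a <= t <= b -> Rabs (C - f t) <= K) ->
  Rabs (C * (h b - h a) - I) <= K * (h b - h a).
Proof.
  intros Hab Hh HI HK. apply Rle_plus_epsilon. intros eta He.
  destruct (HI eta He) as [d [Hd HP]]. destruct (cousin d a b Hab Hd) as [P HPf].
  specialize (HP P HPf).
  pose proof (bound_sum f h a b Hh K C a P (Rle_refl a) (fine_tchain _ _ _ _ HPf) HK).
  replace (C * (h b - h a) - I) with ((C * (h b - h a) - RS_sum f h P) + (RS_sum f h P - I)) by ring.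
  eapply Rle_trans; [apply Rabs_triang|]. lra.
Qed.

Theorem mainTheorem3 (a b H p : R) (f g : R -> R) :
  a < b -> 0 < H -> 0 < p <= 1 ->
  nondecreasing_on g a b ->
  left_continuous_on g a b ->
  holder_on (cont_part g a) a b H p ->
  g_lipschitz_on f g a b H ->
  (exists I, KS_integral f (cont_part g a) a b I) /\
  (forall I, KS_integral f (cont_part g a) a b I ->
     Rabs (f a * (cont_part g a b - cont_part g a a) - I)
       <= H ^ 2 * rpow (b - a) p * (g b - g a) /\
     Rabs ((f a + f b) / 2 * (cont_part g a b - cont_part g a a) - I)
       <= H ^ 2 * rpow ((b - a) / 2) p * (g b - g a)).
Proof.
  intros Hab HH Hp Hg Hlc Hhol Hf.
  set (h := cont_part g a) in *.
  assert (Hh : nondecreasing_on h a b) by (intros x y Hx Hxy Hy; apply (cont_part_mono g a b); auto).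
  set (D := g b - g a).
  assert (HD : 0 <= D) by (unfold D; assert (g a <= g b) by (apply Hg; lra); lra).
  pose proof (holder_osc h a b H p HH (proj1 Hp) Hhol) as Osc.
  set (Un := fun n => RS_sum f h (unif a ((b - a) / INR (S n)) (S n))).
  assert (Hfn : forall d, 0 < d -> exists N, forall n, (N <= n)%nat ->
            fine_tagged_division (fun _ => d) a b (unif a ((b - a) / INR (S n)) (S n))).
  { intros d Hd. destruct (arch ((b - a) / d)) as [N HN]. exists N. intros n Hn.
    assert (Hpos : 0 < INR (S n)) by (apply lt_0_INR; lia).
    assert (INR N <= INR n) by (apply le_INR; auto). pose proof (pos_INR n).
    assert (Hst : 0 < (b - a) / INR (S n) < d).
    { split; [apply Rdiv_lt_0_compat; lra|].
      apply (Rmult_lt_reg_r (INR (S n))); [lra|].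
      unfold Rdiv. rewrite Rmult_assoc, Rinv_l by lra. rewrite Rmult_1_r, S_INR.
      replace (b - a) with (d * ((b - a) / d)) at 1 by (field; lra). nra. }
    pose proof (unif_fine d ((b - a) / INR (S n)) (S n) Hst a) as Hu.
    replace (a + INR (S n) * ((b - a) / INR (S n))) with b in Hu by (field; rewrite S_INR; lra). exact Hu. }
  assert (Heps : forall eps, 0 < eps -> let e' := eps / (4 * (H * D + 1)) in 0 < e' /\ 2 * H * e' * D < eps / 2).
  { intros eps He e'. assert (0 < 4 * (H * D + 1)) by nra.
    assert (Ee : e' * (4 * (H * D + 1)) = eps) by (unfold e'; field; lra).
    assert (0 < e') by (unfold e'; apply Rdiv_lt_0_compat; lra). split; auto. nra. }
  assert (Hc : Cauchy_crit Un).
  { intros eps He. destruct (Heps eps He) as [He1 He2].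
    destruct (Osc _ He1) as [d [Hd Hos]]. destruct (Hfn d Hd) as [N HN].
    exists N. intros n m Hn Hm. unfold Rdist, Un.
    eapply Rle_lt_trans.
    - apply (cauchy_fine f g h a b H Hg Hh Hf ltac:(lra) d _ _ _ Hd Hab Hos (HN n Hn) (HN m Hm)).
    - fold D. lra. }
  destruct (R_complete Un Hc) as [I HI].
  split.
  - exists I. intros eps He. destruct (Heps eps He) as [He1 He2].
    destruct (Osc _ He1) as [d [Hd Hos]]. destruct (Hfn d Hd) as [N HN].
    destruct (HI (eps / 2) ltac:(lra)) as [N2 HN2].
    exists (fun _ => d). split; [intros; lra|]. intros P HP.
    set (n := Nat.max N N2).
    specialize (HN2 n ltac:(lia)). unfold Rdist in HN2.
    pose proof (cauchy_fine f g h a b H Hg Hh Hf ltac:(lra) d _ _ _ Hd Hab Hos HP (HN n ltac:(lia))) as Hcf.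
    fold D in Hcf. fold (Un n) in Hcf.
    replace (RS_sum f h P - I) with ((RS_sum f h P - Un n) + (Un n - I)) by ring.
    eapply Rle_lt_trans; [apply Rabs_triang|]. lra.
  - intros J HJ.
    assert (Hhb : h b - h a <= H * rpow (b - a) p).
    { pose proof (Hhol b a ltac:(lra) ltac:(lra)). rewrite (Rabs_pos_eq (b - a)) in H0 by lra.
      eapply Rle_trans; [apply Rle_abs|]. auto. }
    assert (Hhab : h a <= h b) by (apply Hh; lra).
    assert (Hga : forall t, a <= t <= b -> g a <= g t /\ g t <= g b) by (intros; split; apply Hg; lra).
    split.
    + eapply Rle_trans.
      * apply (KS_bound f h a b J (H * D) (f a) Hab Hh HJ).
        intros t Ht. eapply Rle_trans; [apply Hf; lra|]. destruct (Hga t Ht).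
        rewrite Rabs_left1 by lra. apply Rmult_le_compat_l; unfold D; lra.
      * fold D. replace (H ^ 2) with (H * H) by ring.
        assert (H * D * (h b - h a) <= H * D * (H * rpow (b - a) p)) by (apply Rmult_le_compat_l; nra).
        lra.
    + eapply Rle_trans.
      * apply (KS_bound f h a b J (H * D / 2) ((f a + f b) / 2) Hab Hh HJ).
        intros t Ht. destruct (Hga t Ht).
        replace ((f a + f b) / 2 - f t) with (((f a - f t) + (f b - f t)) / 2) by field.
        unfold Rdiv. rewrite Rabs_mult, (Rabs_pos_eq (/2)) by lra.
        pose proof (Hf a t ltac:(lra) Ht) as L1. pose proof (Hf b t ltac:(lra) Ht) as L2.
        rewrite (Rabs_left1 (g a - g t)) in L1 by lra. rewrite (Rabs_pos_eq (g b - g t)) in L2 by lra.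
        pose proof (Rabs_triang (f a - f t) (f b - f t)). unfold D. nra.
      * fold D. replace (H ^ 2) with (H * H) by ring.
        pose proof (rpow_half (b - a) p ltac:(lra) Hp).
        assert (H * D / 2 * (h b - h a) <= H * D / 2 * (H * rpow (b - a) p)) by (apply Rmult_le_compat_l; nra).
        assert (H * H * D * (rpow (b - a) p / 2) <= H * H * D * rpow ((b - a) / 2) p) by (apply Rmult_le_compat_l; nra).
        nra.
Qed.
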